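(* Let $\mathbf{A}\in\mathbb{Z}^{m\times n}$ have at least one nonzero entry in every row and column, and let $\mathbf{A}^{Z}=\begin{pmatrix}\mathbf{A} & -\mathbf{A}\mathbf{1}\end{pmatrix}\in\mathbb{Z}^{m\times(n+1)}$, where $\mathbf{1}\in\mathbb{R}^n$ is the all-ones vector. Then there is an absolute constant $C$ such that $\kappa(\mathbf{A}^{Z})\le C\,n^{3/2}\,\kappa(\mathbf{A})$.
   Context: For a nonzero matrix $\mathbf{M}$, $\kappa(\mathbf{M})=\sigma_{\max}(\mathbf{M})/\sigma_{\min}(\mathbf{M})$, where $\sigma_{\max}$ is the largest singular value and $\sigma_{\min}$ the smallest nonzero singular value. *)

(* Defs.v *)
From mathcomp Require Import all_boot all_order all_algebra.
From mathcomp Require Import reals polyrcf.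
Set Implicit Arguments. Unset Strict Implicit. Unset Printing Implicit Defensive.
Import Order.TTheory GRing.Theory Num.Theory.
Local Open Scope ring_scope.

(* Squares of the nonzero singular values of M : the positive eigenvalues of
   M^T M, i.e. the positive real roots of its characteristic polynomial
   (rootsR lists the distinct real roots, sorted increasingly). *)
Definition sv_sq (R : realType) (m n : nat) (M : 'M[R]_(m, n)) : seq R :=
  [seq x <- rootsR (char_poly (M^T *m M)) | 0 < x].

Definition sigma_max (R : realType) (m n : nat) (M : 'M[R]_(m, n)) : R :=
  Num.sqrt (\big[Num.max/0]_(x <- sv_sq M) x).

Definition sigma_min (R : realType) (m n : nat) (M : 'M[R]_(m, n)) : R :=
  Num.sqrt (\big[Num.min/head 0 (sv_sq M)]_(x <- sv_sq M) x).

Definition kappa (R : realType) (m n : nat) (M : 'M[R]_(m, n)) : R :=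
  sigma_max M / sigma_min M.

Definition AZ (m n : nat) (A : 'M[int]_(m, n)) : 'M[int]_(m, n + 1) :=
  row_mx A (- (A *m const_mx 1)).

Definition mxZtoR (R : realType) (m n : nat) (A : 'M[int]_(m, n)) : 'M[R]_(m, n) :=
  map_mx (fun z : int => z%:~R) A.

(* Main.v *)
Require Import Defs.
From mathcomp Require Import all_boot all_order all_algebra.
From mathcomp Require Import reals polyrcf.
From mathcomp Require Import complex sesquilinear spectral.
From mathcomp Require Import ring lra zify.
Import Order.TTheory GRing.Theory Num.Theory.
Local Open Scope ring_scope.

Module Aux.
Import Num.Def.
Local Open Scope sesquilinear_scope.
Set Implicit Arguments. Unset Strict Implicit. Unset Printing Implicit Defensive.

Section S.
Variable R : realType.
Local Notation C := (R[i]).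
Local Notation toC := (real_complex R).

Lemma real_spectral n (S : 'M[R]_n) : S^T = S ->
  exists P : 'M[C]_n, exists d : 'rV[R]_n,
    P \is unitarymx /\ map_mx toC S = (P ^t conjC) *m diag_mx (map_mx toC d) *m P.
Proof.
move=> sS.
set A := map_mx toC S.
have Ah : A \is hermsymmx.
  apply: realsym_hermsym.
    by apply/is_hermitianmxP; rewrite expr0 scale1r /A map_mx_id // map_trmx sS.
  by apply/mxOverP => i j; rewrite mxE; apply/complex_realP; eexists.
have /orthomx_spectralP eA := hermitian_normalmx Ah.
have dr := hermitian_spectral_diag_real Ah.
exists (spectralmx A), (map_mx (@complex.Re R) (spectral_diag A)); split.
  exact: spectral_unitarymx.
rewrite -invmx_unitary ?spectral_unitarymx //.
have -> : map_mx toC (map_mx (@complex.Re R) (spectral_diag A)) = spectral_diag A.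
  apply/matrixP => i j; rewrite !mxE; apply: RRe_real.
  exact: (mxOverP dr).
exact: eA.
Qed.

Definition svs n (S : 'M[R]_n) := [seq x <- rootsR (char_poly S) | 0 < x].
Definition lmax n (S : 'M[R]_n) := \big[Num.max/0]_(x <- svs S) x.
Definition lmin n (S : 'M[R]_n) := \big[Num.min/head 0 (svs S)]_(x <- svs S) x.

Lemma mem_svs n (S : 'M[R]_n) a : (a \in svs S) = (0 < a) && eigenvalue S a.
Proof.
rewrite mem_filter eigenvalue_root_char; congr (_ && _).
have nz : char_poly S != 0 by rewrite monic_neq0 // char_poly_monic.
by rewrite -(roots_on_rootsR nz).
Qed.

Lemma bigmax_ub (s : seq R) a : a \in s -> a <= \big[Num.max/0]_(x <- s) x.
Proof.
elim: s => // b s IH; rewrite in_cons big_cons => /orP[/eqP->|/IH h].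
  by rewrite le_max lexx.
by rewrite le_max h orbT.
Qed.

Lemma bigmax_lub (s : seq R) c : 0 <= c -> (forall a, a \in s -> a <= c) ->
  \big[Num.max/0]_(x <- s) x <= c.
Proof.
move=> c0; elim: s => [|b s IH] h; first by rewrite big_nil.
rewrite big_cons ge_max h ?mem_head // IH // => a ha; apply: h.
by rewrite in_cons ha orbT.
Qed.

Lemma bigmin_lb (s : seq R) d a : a \in s -> \big[Num.min/d]_(x <- s) x <= a.
Proof.
elim: s => // b s IH; rewrite in_cons big_cons => /orP[/eqP->|/IH h].
  by rewrite ge_min lexx.
by rewrite ge_min h orbT.
Qed.

Lemma bigmin_glb (s : seq R) d c : c <= d -> (forall a, a \in s -> c <= a) ->
  c <= \big[Num.min/d]_(x <- s) x.
Proof.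
move=> c0; elim: s => [|b s IH] h; first by rewrite big_nil.
rewrite big_cons le_min h ?mem_head // IH // => a ha; apply: h.
by rewrite in_cons ha orbT.
Qed.

Lemma lmax_ge0 n (S : 'M[R]_n) : 0 <= lmax S.
Proof.
rewrite /lmax; elim: (svs S) => [|b s IH]; first by rewrite big_nil.
by rewrite big_cons le_max IH orbT.
Qed.

Lemma svs_gt0 n (S : 'M[R]_n) a : a \in svs S -> 0 < a.
Proof. by rewrite mem_svs => /andP[]. Qed.

Lemma lmin_ge0 n (S : 'M[R]_n) : 0 <= lmin S.
Proof.
rewrite /lmin; case E: (svs S) => [|b s]; first by rewrite big_nil.
apply: bigmin_glb => [|a ha]; apply/ltW/(@svs_gt0 _ S); rewrite E //=.
exact: mem_head.
Qed.

Lemma bigmin_gt (s : seq R) d c : c < d -> (forall a, a \in s -> c < a) ->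
  c < \big[Num.min/d]_(x <- s) x.
Proof.
move=> c0; elim: s => [|b s IH] h; first by rewrite big_nil.
rewrite big_cons lt_min h ?mem_head // IH // => a ha; apply: h.
by rewrite in_cons ha orbT.
Qed.

Lemma lmin_gt0 n (S : 'M[R]_n) : svs S != [::] -> 0 < lmin S.
Proof.
rewrite /lmin; case E: (svs S) => [|b s] // _.
apply: bigmin_gt => [|a ha]; apply: (@svs_gt0 _ S); rewrite E //=.
exact: mem_head.
Qed.


Lemma quad_diag n (y e : 'rV[C]_n) :
  (y *m diag_mx e *m y ^t conjC) 0 0 = \sum_i e 0 i * (y 0 i * conjC (y 0 i)).
Proof.
rewrite mxE; apply: eq_bigr => i _; rewrite mul_mx_diag !mxE.
by rewrite mulrAC mulrC.
Qed.

Lemma quad_id n (y : 'rV[C]_n) :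
  (y *m y ^t conjC) 0 0 = \sum_i (y 0 i * conjC (y 0 i)).
Proof. by rewrite mxE; apply: eq_bigr => i _; rewrite !mxE. Qed.

Lemma diag_sq n (e : 'rV[C]_n) :
  diag_mx e *m diag_mx e = diag_mx (\row_j (e 0 j ^+ 2)).
Proof.
apply/matrixP => i j; rewrite mul_mx_diag !mxE.
by case: eqP => [->|_]; rewrite ?mulr1n ?mulr0n ?mul0r // expr2.
Qed.

Lemma tcM m n p (A : 'M[C]_(m, n)) (B : 'M[C]_(n, p)) :
  (A *m B) ^t conjC = B ^t conjC *m A ^t conjC.
Proof. by rewrite trmx_mul map_mxM. Qed.

Lemma real_tc n (x : 'rV[R]_n) :
  (map_mx toC x) ^t conjC = (map_mx toC x)^T.
Proof.
apply/matrixP => i j; rewrite !mxE; apply: conj_Creal.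
by apply/complex_realP; eexists.
Qed.

Lemma mapE m n (A : 'M[R]_(m, n)) i j : toC (A i j) = (map_mx toC A) i j.
Proof. by rewrite mxE. Qed.

Lemma spectral_quad n (S : 'M[R]_n) : S^T = S ->
  exists (d : 'rV[R]_n), (forall i, eigenvalue S (d 0 i)) /\
    forall x : 'rV[R]_n, exists (w : 'I_n -> C), (forall i, 0 <= w i) /\
     [/\ toC ((x *m S *m x^T) 0 0) = \sum_i toC (d 0 i) * w i,
         toC ((x *m x^T) 0 0) = \sum_i w i &
         toC ((x *m S *m S *m x^T) 0 0) = \sum_i toC (d 0 i ^+ 2) * w i].
Proof.
move=> sS; have [P [d [Pu eA]]] := real_spectral sS.
have Punit := unitarymx_unit Pu.
have PQ : P *m P ^t conjC = 1%:M by apply/unitarymxP.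
have QP : P ^t conjC *m P = 1%:M by rewrite -invmx_unitary // mulVmx.
exists d; split.
  move=> i; rewrite -(eigenvalue_map (real_complex R)) eA.
  apply/eigenvalueP; exists (delta_mx 0 i *m P).
    rewrite !mulmxA -[_ *m P ^t conjC]mulmxA PQ mulmx1.
    rewrite -[delta_mx 0 i *m diag_mx _]rowE row_diag_mx mxE -scalemxAl //.
  apply/eqP => h.
  have := @mulmxK _ n 1 P Punit (delta_mx 0 i); rewrite /= h mul0mx => /matrixP/(_ 0 i).
  by rewrite !mxE !eqxx /= => /esym/eqP; rewrite oner_eq0.
move=> x; set xc := map_mx toC x.
set y := xc *m P ^t conjC.
exists (fun i => y 0 i * conjC (y 0 i)); split.
  by move=> i; apply: mul_conjC_ge0.
have Py : P *m xc^T = y ^t conjC by rewrite tcM trmxCK real_tc.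
split.
- rewrite mapE.
  rewrite !map_mxM -map_trmx eA -/xc !mulmxA -[_ *m P *m _]mulmxA Py.
  by rewrite quad_diag; apply: eq_bigr => i _; rewrite mxE.
- rewrite mapE.
  rewrite !map_mxM -map_trmx -/xc -{1}[xc]mulmx1 -QP !mulmxA -[_ *m P *m _]mulmxA.
  by rewrite Py quad_id.
- have AA : map_mx toC S *m map_mx toC S =
    P ^t conjC *m diag_mx (\row_j (toC (d 0 j) ^+ 2)) *m P.
    rewrite eA !mulmxA -[P ^t conjC *m _ *m P *m P ^t conjC]mulmxA PQ mulmx1.
    rewrite -[P ^t conjC *m _ *m diag_mx _]mulmxA diag_sq.
    by congr (_ *m diag_mx _ *m _); apply/matrixP => i j; rewrite !mxE.
  rewrite mapE !map_mxM -map_trmx -/xc -[xc *m _ *m _]mulmxA AA.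
  rewrite !mulmxA -[_ *m P *m _]mulmxA Py.
  by rewrite quad_diag; apply: eq_bigr => i _; rewrite !mxE rmorphXn.
Qed.


Lemma rayleigh_max n (S : 'M[R]_n) (x : 'rV[R]_n) : S^T = S ->
  (x *m S *m x^T) 0 0 <= lmax S * (x *m x^T) 0 0.
Proof.
move=> sS; have [d [ev H]] := spectral_quad sS; have [w [w0 [e1 e2 _]]] := H x.
have dle : forall i, d 0 i <= lmax S.
  move=> i; case: (ltP 0 (d 0 i)) => h.
    by apply: bigmax_ub; rewrite mem_svs h ev.
  exact: le_trans h (lmax_ge0 S).
rewrite -subr_ge0 -ler0c rmorphB rmorphM /= e1 e2 mulr_sumr -sumrB.
apply: sumr_ge0 => i _; rewrite -mulrBl mulr_ge0 //.
by rewrite -rmorphB ler0c subr_ge0.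
Qed.

Lemma rayleigh_min n (S : 'M[R]_n) (x : 'rV[R]_n) : S^T = S ->
  lmin S * (x *m S *m x^T) 0 0 <= (x *m S *m S *m x^T) 0 0.
Proof.
move=> sS; have [d [ev H]] := spectral_quad sS; have [w [w0 [e1 _ e3]]] := H x.
have dle : forall i, 0 <= d 0 i ^+ 2 - lmin S * d 0 i.
  move=> i; rewrite expr2 -mulrBl; case: (ltP 0 (d 0 i)) => h.
    rewrite mulr_ge0 ?(ltW h) // subr_ge0.
    by apply: bigmin_lb; rewrite mem_svs h ev.
  by rewrite mulr_le0 // subr_le0 (le_trans h (lmin_ge0 S)).
rewrite -subr_ge0 -ler0c rmorphB rmorphM /= e1 e3 mulr_sumr -sumrB.
apply: sumr_ge0 => i _; rewrite mulrA -mulrBl mulr_ge0 //.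
by rewrite -rmorphM -rmorphB ler0c.
Qed.

Lemma sqn_ge0 k (v : 'rV[R]_k) : 0 <= (v *m v^T) 0 0.
Proof. by rewrite mxE; apply: sumr_ge0 => i _; rewrite mxE -expr2 sqr_ge0. Qed.

Lemma sqn_gt0 k (v : 'rV[R]_k) : v != 0 -> 0 < (v *m v^T) 0 0.
Proof.
move=> vn0; have [j vj] : exists j, v 0 j != 0.
  apply/existsP; apply: contraR vn0 => /existsPn h; apply/eqP/matrixP => i j.
  by rewrite ord1 mxE; apply/eqP; rewrite -[_ == _]negbK h.
rewrite mxE (bigD1 j) //= mxE -expr2.
apply: ltr_wpDr; last by rewrite exprn_even_gt0 // vj.
by apply: sumr_ge0 => i _; rewrite mxE -expr2 sqr_ge0.
Qed.

Definition Bm n : 'M[R]_(n, n + 1) := row_mx 1%:M (- const_mx 1).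

Lemma xnorm_aux n (v1 : 'rV[R]_n) (v2 : 'rV[R]_1) (v := row_mx v1 v2) :
  ((v *m (Bm n)^T) *m (v *m (Bm n)^T)^T) 0 0 <= 2 * (n + 1)%:R * (v *m v^T) 0 0.
Proof.
rewrite /v /Bm !tr_row_mx !mul_row_col trmx1 mulmx1.
have ev2 : v2 *m (- (const_mx 1 : 'M[R]_(n, 1)))^T = - const_mx (v2 0 0).
  apply/matrixP => i j; rewrite !mxE big_ord1 !mxE mulrN1.
  by rewrite (ord1 i).
rewrite ev2 !mxE.
have -> : \sum_(j < 1) v2 0 j * v2^T j 0 = v2 0 0 ^+ 2.
  by rewrite big_ord1 mxE expr2.
move: (v2 0 0) => t.
have -> : \sum_j v1 0 j * v1^T j 0 = \sum_j v1 0 j ^+ 2.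
  by apply: eq_bigr => j _; rewrite mxE expr2.
have -> : \sum_j (v1 - const_mx t) 0 j * (v1 - const_mx t)^T j 0 = \sum_j (v1 0 j - t) ^+ 2.
  by apply: eq_bigr => j _; rewrite !mxE expr2.
apply: (@le_trans _ _ (\sum_(j < n) 2 * (v1 0 j ^+ 2 + t ^+ 2))).
  apply: ler_sum => j _.
  rewrite -subr_ge0; have -> : 2 * (v1 0 j ^+ 2 + t ^+ 2) - (v1 0 j - t) ^+ 2 = (v1 0 j + t) ^+ 2.
    by rewrite !expr2; ring.
  exact: sqr_ge0.
rewrite -mulr_sumr big_split /= sumr_const card_ord.
have s0 : 0 <= \sum_j v1 0 j ^+ 2 by apply: sumr_ge0 => j _; exact: sqr_ge0.
have t0 : 0 <= t ^+ 2 by exact: sqr_ge0.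
move: s0; move: (\sum_j v1 0 j ^+ 2) => s1 s0.
rewrite -mulr_natr natrD.
have n0 : 0 <= n%:R :> R by [].
nra.
Qed.

Lemma xnorm n (v : 'rV[R]_(n + 1)) :
  ((v *m (Bm n)^T) *m (v *m (Bm n)^T)^T) 0 0 <= 2 * (n + 1)%:R * (v *m v^T) 0 0.
Proof. by rewrite -[v]hsubmxK; apply: xnorm_aux. Qed.

Lemma BBt_ge n (z : 'rV[R]_n) : (z *m z^T) 0 0 <= (z *m (Bm n *m (Bm n)^T) *m z^T) 0 0.
Proof.
have -> : z *m (Bm n *m (Bm n)^T) *m z^T = (z *m Bm n) *m (z *m Bm n)^T.
  by rewrite trmx_mul !mulmxA.
set u := z *m Bm n.
have -> : u = row_mx z (z *m - const_mx 1) by rewrite /u /Bm mul_mx_row mulmx1.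
rewrite tr_row_mx mul_row_col [X in _ <= X]mxE lerDl.
exact: sqn_ge0.
Qed.

Lemma key m n (M : 'M[R]_(m, n)) mu :
  mu \in svs ((M *m Bm n)^T *m (M *m Bm n)) ->
  [/\ mu <= 2 * (n + 1)%:R * lmax (M^T *m M), lmin (M^T *m M) <= mu & (0 < n)%N].
Proof.
set G := M^T *m M.
have sG : G^T = G by rewrite /G trmx_mul trmxK.
have eH : (M *m Bm n)^T *m (M *m Bm n) = (Bm n)^T *m G *m Bm n.
  by rewrite trmx_mul !mulmxA.
clearbody G.
rewrite eH mem_svs => /andP[mu0 /eigenvalueP [v Hv vn0]].
set x := v *m (Bm n)^T.
have qx : (x *m G *m x^T) 0 0 = mu * (v *m v^T) 0 0.
  rewrite /x trmx_mul trmxK.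
  have -> : v *m (Bm n)^T *m G *m (Bm n *m v^T) = (v *m ((Bm n)^T *m G *m Bm n)) *m v^T.
    by rewrite !mulmxA.
  by rewrite Hv -scalemxAl mxE.
have vp := sqn_gt0 vn0.
have qp : 0 < (x *m G *m x^T) 0 0 by rewrite qx mulr_gt0.
split.
- have h1 := rayleigh_max x sG.
  have h2 := xnorm v.
  rewrite qx in h1.
  have : mu * (v *m v^T) 0 0 <= (2 * (n + 1)%:R * lmax G) * (v *m v^T) 0 0.
    apply: (le_trans h1).
    rewrite (_ : 2 * (n + 1)%:R * lmax G * (v *m v^T) 0 0 = lmax G * (2 * (n + 1)%:R * (v *m v^T) 0 0)); last by ring.
    by apply: ler_wpM2l; first exact: lmax_ge0.
  by rewrite ler_pM2r.
- have ex : mu *: x = x *m G *m (Bm n *m (Bm n)^T).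
    by rewrite /x scalemxAl -Hv !mulmxA.
  have h1 := rayleigh_min x sG.
  have h3 := BBt_ge (x *m G).
  have e3 : (x *m G *m (Bm n *m (Bm n)^T) *m (x *m G)^T) 0 0 = mu * (x *m G *m x^T) 0 0.
    by rewrite -ex trmx_mul sG -scalemxAl mulmxA mxE.
  have e4 : (x *m G *m (x *m G)^T) 0 0 = (x *m G *m G *m x^T) 0 0.
    by rewrite trmx_mul sG mulmxA.
  rewrite e3 e4 in h3.
  have : lmin G * (x *m G *m x^T) 0 0 <= mu * (x *m G *m x^T) 0 0 := le_trans h1 h3.
  by rewrite ler_pM2r.
- case: (posnP n) => // n0; move: qp; rewrite mxE big1 ?ltxx // => j _.
  by exfalso; case: j => j; rewrite n0.
Qed.

End S.

Lemma final_ineq (R : realType) (a b c d : R) (n : nat) : (0 < n)%N -> 0 <= a ->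
  a <= 2 * (n + 1)%:R * c -> 0 < d -> d <= b -> 0 <= c ->
  Num.sqrt a / Num.sqrt b <= 2 * Num.sqrt (n%:R ^+ 3) * (Num.sqrt c / Num.sqrt d).
Proof.
move=> n0 a0 hac d0 hdb c0.
have b0 : 0 < b := lt_le_trans d0 hdb.
have hs : Num.sqrt a <= 2 * Num.sqrt (n%:R ^+ 3) * Num.sqrt c.
  apply: (le_trans (ler_wsqrtr hac)); rewrite sqrtrM; last by rewrite mulr_ge0.
  apply: ler_wpM2r; first exact: sqrtr_ge0.
  apply: (@le_trans _ _ (Num.sqrt (2 ^+ 2 * n%:R ^+ 3))).
    apply: ler_wsqrtr.
    have n1 : 1 <= n%:R :> R by rewrite ler1n.
    rewrite natrD; nra.
  by rewrite sqrtrM ?sqrtr_sqr ?ger0_norm // exprn_ge0.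
rewrite mulrA; apply: ler_pM; rewrite ?invr_ge0 ?sqrtr_ge0 //.
by rewrite lef_pV2 ?posrE ?sqrtr_gt0 // ler_wsqrtr.
Qed.


Lemma AZ_eq (R : realType) m n (A : 'M[int]_(m, n)) :
  mxZtoR R (AZ A) = mxZtoR R A *m Bm R n.
Proof.
rewrite /mxZtoR /AZ /Bm map_row_mx mul_mx_row mulmx1; congr row_mx.
apply/matrixP => i j; rewrite !mxE rmorphN rmorph_sum -sumrN.
by apply: eq_bigr => k _; rewrite !mxE !mulr1 mulrN1.
Qed.

End Aux.
Import Aux.

Theorem lemma7p8 (R : realType) :
  exists C : R, forall (m n : nat) (A : 'M[int]_(m, n)),
    (forall i : 'I_m, exists j : 'I_n, A i j != 0) ->
    (forall j : 'I_n, exists i : 'I_m, A i j != 0) ->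
    kappa (mxZtoR R (AZ A)) <= C * Num.sqrt (n%:R ^+ 3) * kappa (mxZtoR R A).
Proof.
exists 2 => m n A _ _.
rewrite AZ_eq; move: (mxZtoR R A) => M.
rewrite /kappa /sigma_max /sigma_min.
change (Num.sqrt (lmax ((M *m Bm R n)^T *m (M *m Bm R n))) /
        Num.sqrt (lmin ((M *m Bm R n)^T *m (M *m Bm R n))) <=
        2 * Num.sqrt (n%:R ^+ 3) *
        (Num.sqrt (lmax (M^T *m M)) / Num.sqrt (lmin (M^T *m M)))).
have K := @key R m n M.
move: K; set H := (M *m Bm R n)^T *m (M *m Bm R n); set G := M^T *m M => K.
case E: (svs H) => [|mu0 s].
  rewrite /lmax E big_nil sqrtr0 mul0r.
  apply: mulr_ge0; first by apply: mulr_ge0; rewrite ?sqrtr_ge0.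
  by apply: divr_ge0; apply: sqrtr_ge0.
have m0 : mu0 \in svs H by rewrite E mem_head.
have [u0 l0 npos] := K _ m0.
have hmax : lmax H <= 2 * (n + 1)%:R * lmax G.
  apply: bigmax_lub; first by apply: mulr_ge0; [apply: mulr_ge0 | exact: lmax_ge0].
  by move=> a /K [].
have hmin : lmin G <= lmin H.
  rewrite /lmin E /=; apply: bigmin_glb => // a ha.
  by have [] := K a; rewrite ?E.
have Gne : svs G != [::].
  apply/eqP => E'; have : lmax G = 0 by rewrite /lmax E' big_nil.
  move=> h; move: u0; rewrite h mulr0 leNgt.
  by rewrite (svs_gt0 m0).
apply: final_ineq => //; first exact: lmax_ge0.
  exact: lmin_gt0.
exact: lmax_ge0.
Qed.
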